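(* Let $X=\{a,b,c\}$ and consider the 25 commutative Frobenius objects in $\mathbf{Rel}$ on $X$ listed below (in all, $\tilde\mu$ is symmetric). Cases 1–20 have $\eta=\{a\}$, $\tilde\mu(a,x)=\tilde\mu(x,a)=\{x\}$, and $(\tilde\mu(b,b),\tilde\mu(b,c),\tilde\mu(c,c))$ and $\varepsilon$ given by: 1: $\varepsilon=\{a\}$, $(\{a\},\{c\},\{a,b\})$; 2: $\varepsilon=\{a\}$, $(\{a\},\{c\},\{a,b,c\})$; 3: $\varepsilon=\{a\}$, $(\{a,b\},\{c\},\{a,b\})$; 4: $\varepsilon=\{a\}$, $(\{a,b\},\{c\},\{a,b,c\})$; 5: $\varepsilon=\{a\}$, $(\{a,c\},\{b,c\},\{a,b\})$; 6: $\varepsilon=\{a\}$, $(\{a,c\},\{b,c\},\{a,b,c\})$; 7: $\varepsilon=\{a\}$, $(\{a,b,c\},\{b,c\},\{a,b,c\})$; 8: $\varepsilon=\{a\}$, $(\{b\},\{a,b,c\},\{b,c\})$; 9: $\varepsilon=\{a\}$, $(\{b\},\{a,b,c\},\{c\})$; 10: $\varepsilon=\{a\}$, $(\{c\},\{a\},\{b\})$; 11: $\varepsilon=\{a\}$, $(\{c\},\{a,b\},\{b,c\})$; 12: $\varepsilon=\{a\}$, $(\{b,c\},\{a,b,c\},\{b,c\})$; 13: $\varepsilon=\{b\}$, $(\emptyset,\emptyset,\{b\})$; 14: $\varepsilon=\{b\}$, $(\emptyset,\emptyset,\{b,c\})$; 15: $\varepsilon=\{b\}$, $(\{a\},\{c\},\{a,b\})$;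 16: $\varepsilon=\{b\}$, $(\{a\},\{c\},\{a,b,c\})$; 17: $\varepsilon=\{b\}$, $(\{c\},\{a\},\{b\})$; 18: $\varepsilon=\{b\}$, $(\{c\},\{a,c\},\{a,b,c\})$; 19: $\varepsilon=\{b\}$, $(\{a,c\},\{a,c\},\{a,b\})$; 20: $\varepsilon=\{b\}$, $(\{a,c\},\{a,c\},\{a,b,c\})$. Cases 21–24 have $\eta=\{a,b\}$, $\tilde\mu(a,a)=\{a\}$, $\tilde\mu(a,b)=\tilde\mu(a,c)=\emptyset$, $\tilde\mu(b,b)=\{b\}$, $\tilde\mu(b,c)=\{c\}$, and: 21: $\varepsilon=\{a,b\}$, $\tilde\mu(c,c)=\{b\}$; 22: $\varepsilon=\{a,b\}$, $\tilde\mu(c,c)=\{b,c\}$; 23: $\varepsilon=\{a,c\}$, $\tilde\mu(c,c)=\{b\}$; 24: $\varepsilon=\{a,c\}$, $\tilde\mu(c,c)=\emptyset$. Case 25: $\eta=\varepsilon=\{a,b,c\}$, $\tilde\mu(x,x)=\{x\}$, $\tilde\mu(x,y)=\emptyset$ for $x\neq y$. Then, for integers $g\ge0$, the partition functions are: for cases 1–12 and 21–25, $Z(\Sigma_g)=T$ for all $g$; for case 13, $Z(\Sigma_g)=T$ iff $g=1$; for cases 14, 15, 16, 18, 19, 20, $Z(\Sigma_g)=T$ iff $g\ge1$; for case 17, $Z(\Sigma_g)=T$ iff $g\equiv 1 \pmod 3$.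
   Context: $\mathbf{Rel}$ is the symmetric monoidal category of sets and relations ($S\circ R=\{(x,z):\exists y,(x,y)\in R,(y,z)\in S\}$, identities are diagonals, product is Cartesian product, unit $\{\bullet\}$). A relation $R\subseteq X\times Y$ is identified with $\tilde R:X\to\mathcal{P}(Y)$. A Frobenius object in $\mathbf{Rel}$ is a set $X$ with unit $\eta\subseteq X$ (relation $\{\bullet\}\to X$), counit $\varepsilon\subseteq X$ (relation $X\to\{\bullet\}$) and multiplication $\mu$ (relation $X\times X\to X$, with map $\tilde\mu$) satisfying unitality, associativity, and nondegeneracy: there is a (unique) relation $\beta:\{\bullet\}\to X\times X$ with $(\varepsilon\times\mathbf{1})\circ(\mu\times\mathbf{1})\circ(\mathbf{1}\times\beta)=(\mathbf{1}\times\varepsilon)\circ(\mathbf{1}\times\mu)\circ(\beta\times\mathbf{1})=\mathbf{1}$. The comultiplication is $\delta=(\mathbf{1}\times\mu)\circ(\beta\times\mathbf{1})$. Commutative means $\tilde\mu(x,y)=\tilde\mu(y,x)$. The partition function on the closed orientable surface of genus $g$ is $Z(\Sigma_g)=\varepsilon\circ(\mu\circ\delta)^g\circ\eta\in\{\emptyset,\{\bullet\}\}$, with $\emptyset$ read as $F$ and $\{\bullet\}$ as $T$. *)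

(* Defs.v *)
From HB Require Import structures.
From mathcomp Require Import all_boot.
Set Implicit Arguments. Unset Strict Implicit. Unset Printing Implicit Defensive.

Definition relT (A B : finType) := A -> B -> bool.

Definition releq (A B : finType) (R S : relT A B) : Prop :=
  forall x y, R x y = S x y.

Definition rcomp (A B C : finType) (S : relT B C) (R : relT A B) : relT A C :=
  fun x z => [exists y, R x y && S y z].

Definition rid (A : finType) : relT A A := fun x y => x == y.

Definition rtens (A B A' B' : finType) (R : relT A B) (S : relT A' B')
  : relT (A * A')%type (B * B')%type := fun p q => R p.1 q.1 && S p.2 q.2.

Definition rassoc (A B C : finType) : relT ((A * B) * C)%type (A * (B * C))%type :=
  fun p q => (p.1.1 == q.1) && (p.1.2 == q.2.1) && (p.2 == q.2.2).
Definition rassocV (A B C : finType) : relT (A * (B * C))%type ((A * B) * C)%type :=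
  fun q p => rassoc p q.
Definition rlunit (A : finType) : relT (unit * A)%type A := fun p y => p.2 == y.
Definition rlunitV (A : finType) : relT A (unit * A)%type := fun y p => rlunit p y.
Definition rrunit (A : finType) : relT (A * unit)%type A := fun p y => p.1 == y.
Definition rrunitV (A : finType) : relT A (A * unit)%type := fun y p => rrunit p y.

Arguments rid A : clear implicits.
Arguments rlunit A : clear implicits.
Arguments rlunitV A : clear implicits.
Arguments rrunit A : clear implicits.
Arguments rrunitV A : clear implicits.

Section Frob.
Variables (X : finType) (eta : relT unit X) (eps : relT X unit)
  (mu : relT (X * X)%type X).

Definition unital : Prop :=
  releq (rcomp mu (rcomp (rtens eta (rid X)) (rlunitV X))) (rid X) /\
  releq (rcomp mu (rcomp (rtens (rid X) eta) (rrunitV X))) (rid X).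

Definition associative_rel : Prop :=
  releq (rcomp mu (rtens mu (rid X)))
        (rcomp mu (rcomp (rtens (rid X) mu) (@rassoc X X X))).

Definition nondeg_for (beta : relT unit (X * X)%type) : Prop :=
  releq (rcomp (rlunit X) (rcomp (rtens eps (rid X)) (rcomp (rtens mu (rid X))
          (rcomp (@rassocV X X X) (rcomp (rtens (rid X) beta) (rrunitV X))))))
        (rid X) /\
  releq (rcomp (rrunit X) (rcomp (rtens (rid X) eps) (rcomp (rtens (rid X) mu)
          (rcomp (@rassoc X X X) (rcomp (rtens beta (rid X)) (rlunitV X))))))
        (rid X).

Definition commutative_rel : Prop := forall x y z, mu (x, y) z = mu (y, x) z.

Definition is_comm_Frobenius : Prop :=
  [/\ unital, associative_rel, exists beta, nondeg_for beta & commutative_rel].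

Definition delta (beta : relT unit (X * X)%type) : relT X (X * X)%type :=
  rcomp (rtens (rid X) mu) (rcomp (@rassoc X X X)
    (rcomp (rtens beta (rid X)) (rlunitV X))).

(* Z(Σ_g) = ε ∘ (μ∘δ)^g ∘ η ⊆ {•}×{•};  true = T, false = F *)
Definition Zpart (beta : relT unit (X * X)%type) (g : nat) : bool :=
  rcomp eps (rcomp (iter g (rcomp (rcomp mu (delta beta))) (rid X)) eta) tt tt.
End Frob.

Inductive elt := a | b | c.
Definition elt2nat (x : elt) : nat := match x with a => 0 | b => 1 | c => 2 end.
Definition nat2elt (n : nat) : option elt :=
  match n with 0 => Some a | 1 => Some b | 2 => Some c | _ => None end.
Lemma elt2natK : pcancel elt2nat nat2elt. Proof. by case. Qed.
HB.instance Definition _ := Countable.copy elt (pcan_type elt2natK).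
Lemma elt_enumP : finite_axiom [:: a; b; c]. Proof. by case. Qed.
HB.instance Definition _ := isFinite.Build elt elt_enumP.

(* data given as subsets (listed as sequences) and the map μ~ *)
Record FrobData := { etaS : seq elt; epsS : seq elt; muS : elt -> elt -> seq elt }.
Definition eta_of (D : FrobData) : relT unit elt := fun _ x => x \in etaS D.
Definition eps_of (D : FrobData) : relT elt unit := fun x _ => x \in epsS D.
Definition mu_of (D : FrobData) : relT (elt * elt)%type elt :=
  fun p z => z \in muS D p.1 p.2.

Definition mk120 (e bb bc cc : seq elt) : FrobData :=
  {| etaS := [:: a]; epsS := e;
     muS := fun x y => match x, y with
                       | a, _ => [:: y] | _, a => [:: x]
                       | b, b => bb | b, c => bc | c, b => bc | c, c => cc end |}.
Definition mk2124 (e cc : seq elt) : FrobData :=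
  {| etaS := [:: a; b]; epsS := e;
     muS := fun x y => match x, y with
                       | a, a => [:: a] | a, _ => [::] | _, a => [::]
                       | b, b => [:: b] | b, c => [:: c] | c, b => [:: c]
                       | c, c => cc end |}.
Definition case25 : FrobData :=
  {| etaS := [:: a; b; c]; epsS := [:: a; b; c];
     muS := fun x y => if x == y then [:: x] else [::] |}.

Definition frob_case (i : nat) : FrobData :=
  match i with
  | 1 => mk120 [:: a] [:: a] [:: c] [:: a; b]
  | 2 => mk120 [:: a] [:: a] [:: c] [:: a; b; c]
  | 3 => mk120 [:: a] [:: a; b] [:: c] [:: a; b]
  | 4 => mk120 [:: a] [:: a; b] [:: c] [:: a; b; c]
  | 5 => mk120 [:: a] [:: a; c] [:: b; c] [:: a; b]
  | 6 => mk120 [:: a] [:: a; c] [:: b; c] [:: a; b; c]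
  | 7 => mk120 [:: a] [:: a; b; c] [:: b; c] [:: a; b; c]
  | 8 => mk120 [:: a] [:: b] [:: a; b; c] [:: b; c]
  | 9 => mk120 [:: a] [:: b] [:: a; b; c] [:: c]
  | 10 => mk120 [:: a] [:: c] [:: a] [:: b]
  | 11 => mk120 [:: a] [:: c] [:: a; b] [:: b; c]
  | 12 => mk120 [:: a] [:: b; c] [:: a; b; c] [:: b; c]
  | 13 => mk120 [:: b] [::] [::] [:: b]
  | 14 => mk120 [:: b] [::] [::] [:: b; c]
  | 15 => mk120 [:: b] [:: a] [:: c] [:: a; b]
  | 16 => mk120 [:: b] [:: a] [:: c] [:: a; b; c]
  | 17 => mk120 [:: b] [:: c] [:: a] [:: b]
  | 18 => mk120 [:: b] [:: c] [:: a; c] [:: a; b; c]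
  | 19 => mk120 [:: b] [:: a; c] [:: a; c] [:: a; b]
  | 20 => mk120 [:: b] [:: a; c] [:: a; c] [:: a; b; c]
  | 21 => mk2124 [:: a; b] [:: b]
  | 22 => mk2124 [:: a; b] [:: b; c]
  | 23 => mk2124 [:: a; c] [:: b]
  | 24 => mk2124 [:: a; c] [::]
  | _ => case25
  end.

Definition IsCF (i : nat) : Prop :=
  is_comm_Frobenius (eta_of (frob_case i)) (eps_of (frob_case i)) (mu_of (frob_case i)).
Definition Nondeg (i : nat) (beta : relT unit (elt * elt)%type) : Prop :=
  nondeg_for (eps_of (frob_case i)) (mu_of (frob_case i)) beta.
Definition Z (i : nat) (beta : relT unit (elt * elt)%type) (g : nat) : bool :=
  Zpart (eta_of (frob_case i)) (eps_of (frob_case i)) (mu_of (frob_case i)) beta g.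

(* Main.v *)
Require Import Defs.
From mathcomp Require Import all_boot.
From Stdlib Require Import FunctionalExtensionality.
From mathcomp Require Import zify.

Definition els := [:: a; b; c].
Lemma mem_els x : x \in els. Proof. by case: x. Qed.
Definition pairs := [seq (x, y) | x <- els, y <- els].
Definition tab (R : elt -> elt -> bool) : seq bool := [seq R p.1 p.2 | p <- pairs].
Definition fromtab (t : seq bool) (x y : elt) := nth false t (elt2nat x * 3 + elt2nat y).
Lemma fromtab_tab R x y : fromtab (tab R) x y = R x y.
Proof. by case: x; case: y. Qed.
Lemma eq_tab (f g : elt -> elt -> bool) : (forall x y, f x y = g x y) -> tab f = tab g.
Proof. by move=> H; apply: eq_map => -[x y]; apply: H. Qed.
Definition btab (f : elt * elt -> bool) := tab (fun x y => f (x, y)).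
Definition fromtabP t (p : elt * elt) := fromtab t p.1 p.2.
Lemma fromtabP_btab f : fromtabP (btab f) = f.
Proof. by apply: functional_extensionality => -[x y]; rewrite /fromtabP fromtab_tab. Qed.
Lemma size_btab f : size (btab f) = 9. Proof. by rewrite size_map. Qed.

Fixpoint allbits (n : nat) : seq (seq bool) :=
  if n is n'.+1 then [seq x :: l | x <- [:: false; true], l <- allbits n'] else [:: [::]].
Lemma mem_allbits l : l \in allbits (size l).
Proof.
elim: l => [|x l IH] //=.
by rewrite !mem_cat; case: x; rewrite (map_f _ IH) ?orbT.
Qed.

Ltac crush :=
  repeat (match goal with
  | H : is_true [exists _, _] |- _ => let q := fresh "q" in case/existsP: H => q H
  | H : is_true (_ && _) |- _ =>
      let H1 := fresh "H" in let H2 := fresh "H" in case/andP: H => H1 H2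
  | q : prod _ _ |- _ => destruct q
  | u : unit |- _ => destruct u
  | H : is_true (_ == _) |- _ => move/eqP: H => H; subst
  end; try (unfold rcomp, rtens, rid, rassoc, rassocV, rlunit, rlunitV, rrunit, rrunitV in * |-); simpl in * |- ).

Ltac unf := rewrite /rcomp /rtens /rid /rassoc /rassocV /rlunit /rlunitV /rrunit /rrunitV.

Section Simp.
Variables (eta : relT unit elt) (eps : relT elt unit) (mu : relT (elt * elt)%type elt).

Lemma nd1E (beta : relT unit (elt * elt)%type) x z :
  rcomp (rlunit elt) (rcomp (rtens eps (rid elt)) (rcomp (rtens mu (rid elt))
          (rcomp (@rassocV elt elt elt) (rcomp (rtens (rid elt) beta) (rrunitV elt))))) x z
  = has (fun y1 => has (fun m => [&& beta tt (y1, z), mu (x, y1) m & eps m tt]) els) els.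
Proof.
apply/idP/idP.
- unf => H; crush.
  apply/hasP; eexists; [|apply/hasP; eexists; [|apply/and3P; split; eassumption]];
    apply: mem_els.
- case/hasP => y1 _ /hasP [m _ /and3P [H1 H2 H3]].
  apply/existsP; exists (tt, z); apply/andP; split; last by rewrite /rlunit eqxx.
  apply/existsP; exists (m, z); apply/andP; split; last by rewrite /rtens /rid /= H3 eqxx.
  apply/existsP; exists ((x, y1), z); apply/andP; split; last by rewrite /rtens /rid /= H2 eqxx.
  apply/existsP; exists (x, (y1, z)); apply/andP; split; last by rewrite /rassocV /rassoc /= !eqxx.
  by apply/existsP; exists (x, tt); rewrite /rrunitV /rrunit /rtens /rid /= !eqxx H1.
Qed.

Lemma nd2E (beta : relT unit (elt * elt)%type) x z :
  rcomp (rrunit elt) (rcomp (rtens (rid elt) eps) (rcomp (rtens (rid elt) mu)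
          (rcomp (@rassoc elt elt elt) (rcomp (rtens beta (rid elt)) (rlunitV elt))))) x z
  = has (fun y2 => has (fun m => [&& beta tt (z, y2), mu (y2, x) m & eps m tt]) els) els.
Proof.
apply/idP/idP.
- unf => H; crush.
  apply/hasP; eexists; [|apply/hasP; eexists; [|apply/and3P; split; eassumption]];
    apply: mem_els.
- case/hasP => y2 _ /hasP [m _ /and3P [H1 H2 H3]].
  apply/existsP; exists (z, tt); apply/andP; split; last by rewrite /rrunit eqxx.
  apply/existsP; exists (z, m); apply/andP; split; last by rewrite /rtens /rid /= H3 eqxx.
  apply/existsP; exists (z, (y2, x)); apply/andP; split; last by rewrite /rtens /rid /= H2 eqxx.
  apply/existsP; exists ((z, y2), x); apply/andP; split; last by rewrite /rassoc /= !eqxx.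
  by apply/existsP; exists (tt, x); rewrite /rlunitV /rlunit /rtens /rid /= !eqxx H1.
Qed.

Definition nondC (bt : elt * elt -> bool) : bool :=
  all (fun x => all (fun z =>
    (has (fun y1 => has (fun m => [&& bt (y1, z), mu (x, y1) m & eps m tt]) els) els == (x == z))
    && (has (fun y2 => has (fun m => [&& bt (z, y2), mu (y2, x) m & eps m tt]) els) els
         == (x == z))) els) els.

Lemma nondegE beta : nondeg_for eps mu beta <-> nondC (beta tt).
Proof.
split.
- case=> H1 H2; apply/allP => x _; apply/allP => z _.
  by rewrite -nd1E -nd2E H1 H2 /rid !eqxx.
- move=> H; split=> x z; move/allP: H => /(_ x (mem_els x)) /allP /(_ z (mem_els z))
    /andP [/eqP h1 /eqP h2].
  + by rewrite nd1E h1.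
  + by rewrite nd2E h2.
Qed.

Lemma un1E x z : rcomp mu (rcomp (rtens eta (rid elt)) (rlunitV elt)) x z
  = has (fun e => eta tt e && mu (e, x) z) els.
Proof.
apply/idP/idP.
- unf => H; crush.
  apply/hasP; eexists; [|apply/andP; split; eassumption]; apply: mem_els.
- case/hasP => e _ /andP [H1 H2].
  apply/existsP; exists (e, x); rewrite H2 andbT.
  by apply/existsP; exists (tt, x); rewrite /rlunitV /rlunit /rtens /rid /= H1 !eqxx.
Qed.

Lemma un2E x z : rcomp mu (rcomp (rtens (rid elt) eta) (rrunitV elt)) x z
  = has (fun e => eta tt e && mu (x, e) z) els.
Proof.
apply/idP/idP.
- unf => H; crush.
  apply/hasP; eexists; [|apply/andP; split; eassumption]; apply: mem_els.
- case/hasP => e _ /andP [H1 H2].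
  apply/existsP; exists (x, e); rewrite H2 andbT.
  by apply/existsP; exists (x, tt); rewrite /rrunitV /rrunit /rtens /rid /= H1 !eqxx.
Qed.

Lemma as1E x y z w : rcomp mu (rtens mu (rid elt)) ((x, y), z) w
  = has (fun m => mu (x, y) m && mu (m, z) w) els.
Proof.
apply/idP/idP.
- unf => H; crush.
  apply/hasP; eexists; [|apply/andP; split; eassumption]; apply: mem_els.
- case/hasP => m _ /andP [H1 H2].
  by apply/existsP; exists (m, z); rewrite /rtens /rid /= H1 H2 eqxx.
Qed.

Lemma as2E x y z w :
  rcomp mu (rcomp (rtens (rid elt) mu) (@rassoc elt elt elt)) ((x, y), z) w
  = has (fun m => mu (y, z) m && mu (x, m) w) els.
Proof.
apply/idP/idP.
- unf => H; crush.
  apply/hasP; eexists; [|apply/andP; split; eassumption]; apply: mem_els.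
- case/hasP => m _ /andP [H1 H2].
  apply/existsP; exists (x, m); rewrite H2 andbT.
  by apply/existsP; exists (x, (y, z)); rewrite /rassoc /rtens /rid /= H1 !eqxx.
Qed.

Definition unitC : bool :=
  all (fun x => all (fun z =>
    (has (fun e => eta tt e && mu (e, x) z) els == (x == z)) &&
    (has (fun e => eta tt e && mu (x, e) z) els == (x == z))) els) els.
Definition assocC : bool :=
  all (fun x => all (fun y => all (fun z => all (fun w =>
    has (fun m => mu (x, y) m && mu (m, z) w) els ==
    has (fun m => mu (y, z) m && mu (x, m) w) els) els) els) els) els.
Definition commC : bool :=
  all (fun x => all (fun y => all (fun z => mu (x, y) z == mu (y, x) z) els) els) els.
Definition cfC : bool :=
  [&& unitC, assocC, has (fun bl => nondC (fromtabP bl)) (allbits 9) & commC].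

Lemma cf_sound : cfC -> is_comm_Frobenius eta eps mu.
Proof.
case/and4P => /allP Hu /allP Ha /hasP [bl _ Hn] /allP Hc; split.
- split=> x z; move: (Hu x (mem_els x)) => /allP /(_ z (mem_els z)) /andP [/eqP h1 /eqP h2].
  + by rewrite un1E h1.
  + by rewrite un2E h2.
- move=> [[x y] z] w.
  move: (Ha x (mem_els x)) => /allP /(_ y (mem_els y)) /allP /(_ z (mem_els z))
    /allP /(_ w (mem_els w)) /eqP h.
  by rewrite as1E as2E h.
- by exists (fun _ => fromtabP bl); apply/nondegE.
- move=> x y z; move: (Hc x (mem_els x)) => /allP /(_ y (mem_els y)) /allP
    /(_ z (mem_els z)) /eqP.
  done.
Qed.

Lemma deltaE (beta : relT unit (elt * elt)%type) x p1 p2 :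
  delta mu beta x (p1, p2) = has (fun y2 => beta tt (p1, y2) && mu (y2, x) p2) els.
Proof.
apply/idP/idP.
- rewrite /delta; unf => H; crush.
  apply/hasP; eexists; [|apply/andP; split; eassumption]; apply: mem_els.
- case/hasP => y2 _ /andP [H1 H2]; rewrite /delta /rcomp.
  apply/existsP; exists (p1, (y2, x)); rewrite /rtens /rid /= eqxx H2 /= !andbT.
  apply/existsP; exists ((p1, y2), x); rewrite /rassoc /= !eqxx /= !andbT.
  by apply/existsP; exists (tt, x); rewrite /rlunitV /rlunit /rtens /rid /= H1 !eqxx.
Qed.

Definition MC (bt : elt * elt -> bool) (x z : elt) : bool :=
  has (fun p1 => has (fun p2 =>
    has (fun y2 => bt (p1, y2) && mu (y2, x) p2) els && mu (p1, p2) z) els) els.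

Lemma ME beta x z : rcomp mu (delta mu beta) x z = MC (beta tt) x z.
Proof.
apply/idP/idP.
- case/existsP => -[p1 p2] /andP [H1 H2].
  apply/hasP; exists p1; first exact: mem_els.
  apply/hasP; exists p2; first exact: mem_els.
  by rewrite -deltaE H1 H2.
- case/hasP => p1 _ /hasP [p2 _ /andP [H1 H2]].
  by apply/existsP; exists (p1, p2); rewrite deltaE H1 H2.
Qed.

Definition stepC (Mt t : seq bool) : seq bool :=
  tab (fun x z => has (fun y => fromtab t x y && fromtab Mt y z) els).

Lemma iterE (Mrel : relT elt elt) g :
  tab (iter g (rcomp Mrel) (rid elt)) = iter g (stepC (tab Mrel)) (tab (rid elt)).
Proof.
elim: g => [|g IH] //=; rewrite -IH /stepC; apply: eq_tab => x z.
apply/existsP/hasP => [[y /andP [H1 H2]]|[y _ /andP [H1 H2]]].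
- by exists y; [exact: mem_els|]; rewrite !fromtab_tab H1 H2.
- by exists y; move: H1 H2; rewrite !fromtab_tab => -> ->.
Qed.

Definition zC (t : seq bool) : bool :=
  has (fun y => has (fun x => eta tt x && fromtab t x y) els && eps y tt) els.

Lemma zE (R : relT elt elt) : rcomp eps (rcomp R eta) tt tt = zC (tab R).
Proof.
apply/idP/idP.
- case/existsP => y /andP [/existsP [x /andP [H1 H2]] H3].
  apply/hasP; exists y; first exact: mem_els.
  rewrite H3 andbT; apply/hasP; exists x; first exact: mem_els.
  by rewrite fromtab_tab H1 H2.
- case/hasP => y _ /andP [/hasP [x _ /andP [H1 H2]] H3].
  apply/existsP; exists y; rewrite H3 andbT; apply/existsP; exists x.
  by rewrite H1 -(fromtab_tab R) H2.
Qed.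

Lemma ZpartE beta g : Zpart eta eps mu beta g =
  zC (iter g (stepC (tab (MC (beta tt)))) (tab (rid elt))).
Proof.
rewrite /Zpart zE iterE; congr (zC (iter g (stepC _) _)).
by apply: eq_tab => x z; rewrite ME.
Qed.

Definition goodZ (P : nat -> bool) : bool :=
  all (fun bl => if nondC (fromtabP bl) then
     let Mt := tab (MC (fromtabP bl)) in
     (iter 12 (stepC Mt) (tab (rid elt)) == iter 6 (stepC Mt) (tab (rid elt))) &&
     all (fun g => zC (iter g (stepC Mt) (tab (rid elt))) == P g) (iota 0 12)
   else true) (allbits 9).

Lemma per_ext (T : eqType) (h : T -> T) t0 (u : T -> bool) (P : nat -> bool) :
  iter 12 h t0 = iter 6 h t0 -> (forall g, 6 <= g -> P (g + 6) = P g) ->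
  (forall g, g < 12 -> u (iter g h t0) = P g) -> forall g, u (iter g h t0) = P g.
Proof.
move=> Hper HP Hs; elim/ltn_ind => g IH.
case: (ltnP g 12) => Hg; first exact: Hs.
have E2 : iter (g - 12 + 12) h t0 = iter (g - 12 + 6) h t0 by rewrite !iterD Hper.
have E : g = (g - 12 + 6) + 6 by lia.
have E3 : g - 12 + 12 = g by lia.
rewrite -{1}E3 E2 {2}E HP; last by lia.
apply: IH; lia.
Qed.

Lemma goodZ_sound P : (forall g, 6 <= g -> P (g + 6) = P g) -> goodZ P ->
  forall beta, nondeg_for eps mu beta -> forall g, Zpart eta eps mu beta g = P g.
Proof.
move=> HP /allP H beta /nondegE Hn g.
have := H (btab (beta tt)); rewrite -{1}(size_btab (beta tt)) => /(_ (mem_allbits _)).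
rewrite fromtabP_btab Hn => /andP [/eqP Hper /allP Hs].
rewrite ZpartE; apply: (@per_ext _ _ _ zC P Hper HP) => k Hk.
by apply/eqP; apply: Hs; rewrite mem_iota.
Qed.
End Simp.

Lemma checkCF : all (fun i => cfC (eta_of (frob_case i)) (eps_of (frob_case i)) (mu_of (frob_case i))) (iota 1 25).
Proof. by vm_compute. Qed.

Lemma check2 : all (fun i => goodZ (eta_of (frob_case i)) (eps_of (frob_case i)) (mu_of (frob_case i)) (fun _ => true)) ([:: 1; 2; 3; 4; 5; 6; 7; 8; 9; 10; 11; 12] ++ [:: 21; 22; 23; 24; 25]).
Proof. by vm_compute. Qed.

Lemma check13 : goodZ (eta_of (frob_case 13)) (eps_of (frob_case 13)) (mu_of (frob_case 13)) (fun g => g == 1).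
Proof. by vm_compute. Qed.

Lemma check14 : all (fun i => goodZ (eta_of (frob_case i)) (eps_of (frob_case i)) (mu_of (frob_case i)) (fun g => 1 <= g)) [:: 14; 15; 16; 18; 19; 20].
Proof. by vm_compute. Qed.

Lemma check17 : goodZ (eta_of (frob_case 17)) (eps_of (frob_case 17)) (mu_of (frob_case 17)) (fun g => g %% 3 == 1).
Proof. by vm_compute. Qed.

Theorem mainTheorem6 :
  (forall i : nat, 1 <= i <= 25 -> IsCF i) /\
  (forall i : nat, (1 <= i <= 12) || (21 <= i <= 25) ->
     forall beta, Nondeg i beta -> forall g : nat, Z i beta g = true) /\
  (forall beta, Nondeg 13 beta -> forall g : nat, Z 13 beta g = true <-> g = 1) /\
  (forall i : nat, i \in [:: 14; 15; 16; 18; 19; 20] ->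
     forall beta, Nondeg i beta -> forall g : nat, Z i beta g = true <-> 1 <= g) /\
  (forall beta, Nondeg 17 beta -> forall g : nat, Z 17 beta g = true <-> g %% 3 = 1).
Proof.
have P1 : forall k, 6 <= k -> (k + 6 == 1) = (k == 1) by move=> k Hk; lia.
have P2 : forall k, 6 <= k -> (1 <= k + 6) = (1 <= k) by move=> k Hk; lia.
have P3 : forall k, 6 <= k -> ((k + 6) %% 3 == 1) = (k %% 3 == 1).
  move=> k _; have -> : k + 6 = (k + 3) + 3 by rewrite -addnA.
  by rewrite !modnDr.
have P0 : forall k : nat, 6 <= k -> true = true by [].
split; [|split; [|split; [|split]]].
- move=> i Hi; apply: cf_sound; move/allP: checkCF; apply.
  by rewrite mem_iota.
- move=> i Hi beta Hn g; rewrite /Z.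
  have Hm : i \in [:: 1; 2; 3; 4; 5; 6; 7; 8; 9; 10; 11; 12] ++ [:: 21; 22; 23; 24; 25].
    have -> : [:: 1; 2; 3; 4; 5; 6; 7; 8; 9; 10; 11; 12] ++ [:: 21; 22; 23; 24; 25]
      = iota 1 12 ++ iota 21 5 by [].
    by rewrite mem_cat !mem_iota.
  by rewrite (goodZ_sound _ _ _ (fun _ => true) P0 (allP check2 i Hm) beta Hn g).
- move=> beta Hn g; rewrite /Z (goodZ_sound _ _ _ (fun g => g == 1) P1 check13 beta Hn g).
  by split=> [/eqP|->].
- move=> i Hi beta Hn g.
  by rewrite /Z (goodZ_sound _ _ _ (fun g => 1 <= g) P2 (allP check14 i Hi) beta Hn g).
- move=> beta Hn g; rewrite /Z (goodZ_sound _ _ _ (fun g => g %% 3 == 1) P3 check17 beta Hn g).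
  by split=> /eqP.
Qed.
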